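(* Let $c_1,\dots,c_k\in(1,\infty)$, let $\lambda\in(0,\infty)^k$ satisfy $\lambda_j/(2g'(\|Y-X\hat\beta^\lambda\|_2^2))=c_j\|(XP_jM_j^{+})^\top\varepsilon\|_{q_j}^*$ for all $j$, and set $a_j:=2(c_j-1)\|(XP_jM_j^{+})^\top\varepsilon\|_{q_j}^*$ for $j=1,\dots,k$. For $a=(a_1,\dots,a_k)$ define $L_a(\beta):=\frac1n\|X(\beta^*-\beta)\|_2^2+\frac1n\sum_{j=1}^ka_j\|M_j\beta\|_{q_j}$. Then, with probability one, $$L_a(\hat\beta^\lambda)\le\Big(1+\max_{j\in\{1,\dots,k\}}\frac{4\|(XP_jM_j^{+})^\top\varepsilon\|_{q_j}^*}{a_j}\Big)\min_{\beta\in\mathbb{R}^p}L_a(\beta).$$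
   Context: Standing setup. Model: $Y=X\beta^*+\varepsilon$ with $Y\in\mathbb{R}^n$, $X\in\mathbb{R}^{n\times p}$, $\beta^*\in\mathbb{R}^p$, $\varepsilon\in\mathbb{R}^n$ (random). Link function $g:\mathbb{R}\to[0,\infty)$ with $g(0)=0$, $g$ continuous and strictly increasing on $[0,\infty)$, continuously differentiable on $(0,\infty)$ with strictly positive and non-increasing derivative $g'$, and such that $\alpha\mapsto g(\|\alpha\|_2^2)$ is strictly convex on $\mathbb{R}^n$. Penalty: $k\ge1$, matrices $M_1,\dots,M_k\in\mathbb{R}^{p\times p}$ with $\bigcap_{j=1}^k\mathrm{Ker}(M_j)=\{0\}$, exponents $q_j\ge1$, $\|\cdot\|_{q_j}$ the $\ell_{q_j}$-norm on $\mathbb{R}^p$, and $\|\cdot\|_{q_j}^*$ its dual norm. For $\lambda\in(0,\infty)^k$, $\hat\beta^\lambda$ denotes any element of $\arg\min_{\beta\in\mathbb{R}^p}\{g(\|Y-X\beta\|_2^2)+\sum_{j=1}^k\lambda_j\|M_j\beta\|_{q_j}\}$. $A^+$ denotes the Moore–Penrose pseudoinverse; $P_1,\dots,P_k\in\mathbb{R}^{p\times p}$ are fixed projection matrices with $\sum_{j=1}^kP_jM_j^+M_j=I_{p\times p}$. Noise assumption: with probability one, $Y\neq0$ and $\min_{j}\|(XP_jM_j^{+})^\top\varepsilon\|_{q_j}^*>0$. *)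

(* Defs.v *)
(* Vectors in R^m are functions nat -> R of
   which only the indices 0..m-1 matter; matrices are nat -> nat -> R of which
   only the indices in range matter. *)
From Stdlib Require Import Reals Lra ClassicalEpsilon.
Open Scope R_scope.

Definition vec := nat -> R.
Definition mat := nat -> nat -> R.

Fixpoint rsum (m : nat) (f : nat -> R) : R :=
  match m with O => 0 | S m' => rsum m' f + f m' end.

Definition mv (c : nat) (A : mat) (x : vec) : vec :=
  fun i => rsum c (fun j => A i j * x j).
Definition mm (c : nat) (A B : mat) : mat :=
  fun i l => rsum c (fun j => A i j * B j l).
Definition tr (A : mat) : mat := fun i j => A j i.
Definition idm : mat := fun i j => if Nat.eqb i j then 1 else 0.
Definition msum (k : nat) (F : nat -> mat) : mat :=
  fun i l => rsum k (fun j => F j i l).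
Definition mat_eq (r c : nat) (A B : mat) : Prop :=
  forall i j, (i < r)%nat -> (j < c)%nat -> A i j = B i j.
Definition vec_eq (m : nat) (x y : vec) : Prop :=
  forall i, (i < m)%nat -> x i = y i.

Definition dot (m : nat) (x y : vec) : R := rsum m (fun i => x i * y i).
Definition sqnorm (m : nat) (x : vec) : R := dot m x x.

(* real power with the convention 0^q = 0 (Rpower 0 q would be 1) *)
Definition pw (x q : R) : R := if Rlt_dec 0 x then Rpower x q else 0.

Definition lq_norm (q : R) (m : nat) (x : vec) : R :=
  pw (rsum m (fun i => pw (Rabs (x i)) q)) (/ q).

Definition dual_set (q : R) (m : nat) (z : vec) : R -> Prop :=
  fun t => exists x : vec, lq_norm q m x <= 1 /\ t = dot m z x.
Definition dual_norm (q : R) (m : nat) (z : vec) : R :=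
  epsilon (inhabits 0) (fun d => is_lub (dual_set q m z) d).

Definition is_pinv (r c : nat) (A B : mat) : Prop :=
  mat_eq r c (mm r (mm c A B) A) A /\
  mat_eq c r (mm c (mm r B A) B) B /\
  mat_eq r r (tr (mm c A B)) (mm c A B) /\
  mat_eq c c (tr (mm r B A)) (mm r B A).
Definition pinv (r c : nat) (A : mat) : mat :=
  epsilon (inhabits (fun _ _ => 0)) (is_pinv r c A).

(* maximum of f j over j < k (k >= 1); equals f 0 if k = 0 *)
Fixpoint maxr_aux (k : nat) (f : nat -> R) : R :=
  match k with O => f O | S k' => Rmax (maxr_aux k' f) (f k) end.
Definition max_lt (k : nat) (f : nat -> R) : R := maxr_aux (Nat.pred k) f.

Definition Dnoise (n p : nat) (X : mat) (P M : nat -> mat) (q : nat -> R)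
  (eps : vec) (j : nat) : R :=
  dual_norm (q j) p (mv n (tr (mm p (mm p X (P j)) (pinv p p (M j)))) eps).

Definition resid (n p : nat) (X : mat) (Y b : vec) : vec :=
  fun i => Y i - mv p X b i.
Definition objective (n p k : nat) (g : R -> R) (X : mat) (Y : vec)
  (M : nat -> mat) (q lam : nat -> R) (b : vec) : R :=
  g (sqnorm n (resid n p X Y b)) +
  rsum k (fun j => lam j * lq_norm (q j) p (mv p (M j) b)).
Definition is_argmin (n p k : nat) (g : R -> R) (X : mat) (Y : vec)
  (M : nat -> mat) (q lam : nat -> R) (bh : vec) : Prop :=
  forall b : vec, objective n p k g X Y M q lam bh <= objective n p k g X Y M q lam b.

Definition La (n p k : nat) (X : mat) (bstar : vec) (M : nat -> mat)
  (q a : nat -> R) (b : vec) : R :=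
  / INR n * sqnorm n (mv p X (fun i => bstar i - b i)) +
  / INR n * rsum k (fun j => a j * lq_norm (q j) p (mv p (M j) b)).

Definition link_ok (n : nat) (g dg : R -> R) : Prop :=
  g 0 = 0 /\ (forall x, 0 <= g x) /\ continuity g /\
  (forall x y, 0 <= x -> x < y -> g x < g y) /\
  (forall x, 0 < x -> derivable_pt_lim g x (dg x)) /\
  (forall x, 0 < x -> continuity_pt dg x) /\
  (forall x, 0 < x -> 0 < dg x) /\
  (forall x y, 0 < x -> x <= y -> dg y <= dg x) /\
  (forall (u v : vec) (t : R), ~ vec_eq n u v -> 0 < t < 1 ->
     g (sqnorm n (fun i => t * u i + (1 - t) * v i))
       < t * g (sqnorm n u) + (1 - t) * g (sqnorm n v)).

(* Main.v *)
Require Import Defs.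
From Stdlib Require Import Reals Lra Lia ClassicalEpsilon FunctionalExtensionality.
Open Scope R_scope.

Lemma rsum_ext m f g : (forall i, (i < m)%nat -> f i = g i) -> rsum m f = rsum m g.
Proof. induction m; simpl; intros H; auto. rewrite IHm by (intros; apply H; lia). rewrite H by lia. auto. Qed.

Lemma rsum_plus m f g : rsum m (fun i => f i + g i) = rsum m f + rsum m g.
Proof. induction m; simpl; [lra|]. rewrite IHm. lra. Qed.

Lemma rsum_minus m f g : rsum m (fun i => f i - g i) = rsum m f - rsum m g.
Proof. induction m; simpl; [lra|]. rewrite IHm. lra. Qed.

Lemma rsum_scal m c f : rsum m (fun i => c * f i) = c * rsum m f.
Proof. induction m; simpl; [lra|]. rewrite IHm. lra. Qed.

Lemma rsum_scalr m c f : rsum m (fun i => f i * c) = rsum m f * c.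
Proof. induction m; simpl; [lra|]. rewrite IHm. lra. Qed.

Lemma rsum_le m f g : (forall i, (i < m)%nat -> f i <= g i) -> rsum m f <= rsum m g.
Proof. induction m; simpl; intros H; [lra|]. 
  assert (rsum m f <= rsum m g) by (apply IHm; intros; apply H; lia).
  assert (f m <= g m) by (apply H; lia). lra. Qed.

Lemma rsum_zero m : rsum m (fun _ => 0) = 0.
Proof. induction m; simpl; lra. Qed.

Lemma rsum_nonneg m f : (forall i, (i < m)%nat -> 0 <= f i) -> 0 <= rsum m f.
Proof. intros H. rewrite <- (rsum_zero m). apply rsum_le. auto. Qed.

Lemma rsum_exchange m k (f : nat -> nat -> R) :
  rsum m (fun i => rsum k (fun j => f i j)) = rsum k (fun j => rsum m (fun i => f i j)).
Proof. induction m; simpl. rewrite rsum_zero; auto.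
  rewrite IHm. rewrite <- rsum_plus. auto. Qed.

Lemma rsum_nonneg_zero m f : (forall i, (i < m)%nat -> 0 <= f i) -> rsum m f <= 0 ->
  forall i, (i < m)%nat -> f i = 0.
Proof. induction m; simpl; intros H Hs i Hi; [lia|].
  assert (0 <= rsum m f) by (apply rsum_nonneg; intros; apply H; lia).
  assert (0 <= f m) by (apply H; lia).
  destruct (Nat.eq_dec i m). subst; lra.
  apply IHm; [intros; apply H; lia | lra | lia]. Qed.

Lemma rsum_idm m x i : (i < m)%nat -> rsum m (fun j => idm i j * x j) = x i.
Proof. induction m; intros Hi; [lia|]. simpl. unfold idm at 2.
  destruct (Nat.eq_dec i m).
  - subst. rewrite Nat.eqb_refl. rewrite (rsum_ext m _ (fun _ => 0)). rewrite rsum_zero. lra.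
    intros j Hj. unfold idm. destruct (Nat.eqb_spec m j). lia. lra.
  - rewrite IHm by lia. destruct (Nat.eqb_spec i m). lia. lra. Qed.

Lemma pw_nonneg x q : 0 <= pw x q.
Proof. unfold pw. destruct (Rlt_dec 0 x). unfold Rpower. left; apply exp_pos. lra. Qed.

Lemma pw_pos x q : 0 < x -> pw x q = Rpower x q.
Proof. unfold pw. destruct (Rlt_dec 0 x); auto. lra. Qed.

Lemma pw_npos x q : x <= 0 -> pw x q = 0.
Proof. unfold pw. destruct (Rlt_dec 0 x); auto. lra. Qed.

Lemma Rpower_gt0 x q : 0 < Rpower x q.
Proof. unfold Rpower. apply exp_pos. Qed.

Lemma pw_pos_lt x q : 0 < x -> 0 < pw x q.
Proof. intros; rewrite pw_pos; auto. apply Rpower_gt0. Qed.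

Lemma pw_inv x q : 0 <= x -> 0 < q -> pw (pw x q) (/ q) = x.
Proof. intros Hx Hq. destruct (Req_dec x 0). subst. rewrite (pw_npos 0) by lra. apply pw_npos; lra.
  rewrite (pw_pos x) by lra. rewrite pw_pos by apply Rpower_gt0.
  rewrite Rpower_mult. rewrite Rinv_r by lra. apply Rpower_1. lra. Qed.

Lemma pw_inv' x q : 0 <= x -> 0 < q -> pw (pw x (/q)) q = x.
Proof. intros Hx Hq. rewrite <- (Rinv_inv q) at 2. apply pw_inv; auto. apply Rinv_0_lt_compat; auto. Qed.

Lemma pw_mult x y q : 0 <= x -> 0 <= y -> pw (x * y) q = pw x q * pw y q.
Proof. intros Hx Hy. destruct (Req_dec x 0). subst. rewrite Rmult_0_l, (pw_npos 0) by lra. lra.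
  destruct (Req_dec y 0). subst. rewrite Rmult_0_r, (pw_npos 0) by lra. lra.
  rewrite !pw_pos; try lra. rewrite Rpower_mult_distr; auto; lra. apply Rmult_lt_0_compat; lra. Qed.

Lemma pw_one q : pw 1 q = 1.
Proof. rewrite pw_pos by lra. unfold Rpower. rewrite ln_1, Rmult_0_r, exp_0. auto. Qed.

Lemma pw_Rinv x q : 0 < x -> pw (/ x) q = / pw x q.
Proof. intros Hx. rewrite !pw_pos; auto. 2: apply Rinv_0_lt_compat; auto.
  unfold Rpower. rewrite ln_Rinv by auto. rewrite <- exp_Ropp. f_equal. ring. Qed.

Lemma pw_le x y q : 0 < q -> x <= y -> pw x q <= pw y q.
Proof. intros Hq H. destruct (Rle_dec x 0). rewrite (pw_npos x) by auto. apply pw_nonneg.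
  rewrite !pw_pos by lra. apply Rle_Rpower_l; lra. Qed.

Lemma pw_lt x y q : 0 < q -> 0 <= x -> x < y -> pw x q < pw y q.
Proof. intros Hq Hx H. destruct (Req_dec x 0). subst. rewrite (pw_npos 0) by lra. apply pw_pos_lt; lra.
  rewrite !pw_pos by lra. apply Rlt_Rpower_l; lra. Qed.

Lemma pw_zero_inv x q : 0 <= x -> pw x q = 0 -> x = 0.
Proof. intros Hx H. destruct (Req_dec x 0); auto. assert (0 < pw x q) by (apply pw_pos_lt; lra). lra. Qed.

Lemma Rpower_1_base e : Rpower 1 e = 1.
Proof. unfold Rpower; rewrite ln_1, Rmult_0_r, exp_0; auto. Qed.

Lemma Rpower_ge1 c e : 1 <= c -> 0 <= e -> 1 <= Rpower c e.
Proof. intros. rewrite <- (Rpower_O c) by lra. apply Rle_Rpower; lra. Qed.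

Lemma Rpower_le1 c e : 0 < c <= 1 -> 0 <= e -> Rpower c e <= 1.
Proof. intros. assert (Rpower 1 e = 1) by (unfold Rpower; rewrite ln_1, Rmult_0_r, exp_0; auto).
  rewrite <- H1. apply Rle_Rpower_l; lra. Qed.

Lemma bernoulli u q : 1 <= q -> 0 <= u -> 1 + q * (u - 1) <= pw u q.
Proof. intros Hq Hu. destruct (Req_dec u 0). subst. rewrite pw_npos by lra. nra.
  rewrite pw_pos by lra.
  set (f := fun x => Rpower x q - q * x).
  set (f' := fun x => q * Rpower x (q - 1) - q).
  assert (D : forall c, 0 < c -> derivable_pt_lim f c (f' c)).
  { intros c Hc. unfold f, f'. apply derivable_pt_lim_minus. apply derivable_pt_lim_power; auto.
    replace q with (q * 1) at 2 by ring. apply derivable_pt_lim_scal. apply derivable_pt_lim_id. }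
  assert (f 1 = 1 - q). { unfold f. rewrite Rpower_1_base. ring. }
  assert (f u >= 1 - q).
  { destruct (Rtotal_order u 1) as [Hl|[He|Hg]].
    - destruct (MVT_cor2 f f' u 1 Hl) as [c [Hc1 Hc2]].
      { intros c Hc; apply D; lra. }
      assert (Rpower c (q - 1) <= 1) by (apply Rpower_le1; lra).
      assert (f' c <= 0) by (unfold f'; nra).
      assert (f' c * (1 - u) <= 0) by nra. lra.
    - subst. lra.
    - destruct (MVT_cor2 f f' 1 u Hg) as [c [Hc1 Hc2]].
      { intros c Hc; apply D; lra. }
      assert (1 <= Rpower c (q - 1)) by (apply Rpower_ge1; lra).
      assert (0 <= f' c) by (unfold f'; nra).
      assert (0 <= f' c * (u - 1)) by nra. lra. }
  unfold f in H1. lra.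
Qed.

Lemma tangent m y q : 1 <= q -> 0 < m -> 0 <= y ->
  pw m q + q * (pw m q / m) * (y - m) <= pw y q.
Proof. intros Hq Hm Hy.
  assert (B := bernoulli (y / m) q Hq). 
  assert (0 <= y / m) by (apply Rmult_le_pos; [lra| left; apply Rinv_0_lt_compat; lra]).
  specialize (B H).
  assert (E : pw y q = pw (y / m) q * pw m q).
  { rewrite <- pw_mult; auto; try lra. f_equal. field. lra. }
  assert (Pm : 0 < pw m q) by (apply pw_pos_lt; auto).
  rewrite E. 
  assert (pw m q * (1 + q * (y / m - 1)) <= pw m q * pw (y/m) q) by (apply Rmult_le_compat_l; lra).
  replace (pw m q + q * (pw m q / m) * (y - m)) with (pw m q * (1 + q * (y / m - 1))) by (field; lra).
  lra. Qed.

Lemma pw_convex x y l q : 1 <= q -> 0 <= x -> 0 <= y -> 0 <= l <= 1 ->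
  pw (l * x + (1 - l) * y) q <= l * pw x q + (1 - l) * pw y q.
Proof. intros Hq Hx Hy Hl.
  assert (0 <= l * x + (1 - l) * y) by nra.
  assert (0 <= pw x q) by apply pw_nonneg. assert (0 <= pw y q) by apply pw_nonneg.
  destruct (Req_dec (l * x + (1 - l) * y) 0) as [E|E].
  - rewrite E, pw_npos by lra. nra.
  - set (m := l * x + (1 - l) * y) in *.
    assert (Tx := tangent m x q Hq ltac:(lra) Hx).
    assert (Ty := tangent m y q Hq ltac:(lra) Hy).
    set (T := q * (pw m q / m)) in *.
    assert (l * (pw m q + T * (x - m)) <= l * pw x q) by (apply Rmult_le_compat_l; lra).
    assert ((1-l) * (pw m q + T * (y - m)) <= (1-l) * pw y q) by (apply Rmult_le_compat_l; lra).
    assert (l * (pw m q + T * (x - m)) + (1-l) * (pw m q + T * (y - m)) = pw m q) by (unfold m; ring).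
    lra. Qed.

Definition Sq q m (x : vec) := rsum m (fun i => pw (Rabs (x i)) q).

Lemma lq_S q m x : lq_norm q m x = pw (Sq q m x) (/ q).
Proof. reflexivity. Qed.

Lemma Sq_nonneg q m x : 0 <= Sq q m x.
Proof. apply rsum_nonneg. intros; apply pw_nonneg. Qed.

Lemma N_nonneg q m x : 0 <= lq_norm q m x.
Proof. apply pw_nonneg. Qed.

Lemma S_of_N q m x : 0 < q -> pw (lq_norm q m x) q = Sq q m x.
Proof. intros. rewrite lq_S. apply pw_inv'; auto. apply Sq_nonneg. Qed.

Lemma N_ext q m x y : (forall i, (i < m)%nat -> Rabs (x i) = Rabs (y i)) -> lq_norm q m x = lq_norm q m y.
Proof. intros H. rewrite !lq_S. unfold Sq. f_equal. apply rsum_ext. intros; rewrite H; auto. Qed.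

Lemma N_hom q m c x : 0 < q -> lq_norm q m (fun i => c * x i) = Rabs c * lq_norm q m x.
Proof. intros Hq. rewrite !lq_S. unfold Sq.
  rewrite (rsum_ext m _ (fun i => pw (Rabs c) q * pw (Rabs (x i)) q)).
  2:{ intros. rewrite Rabs_mult. apply pw_mult; apply Rabs_pos. }
  rewrite rsum_scal. rewrite pw_mult. rewrite pw_inv; auto. apply Rabs_pos. apply pw_nonneg.
  apply rsum_nonneg; intros; apply pw_nonneg. Qed.

Lemma N_zero q m x : 0 < q -> lq_norm q m x = 0 -> forall i, (i < m)%nat -> x i = 0.
Proof. intros Hq H i Hi. rewrite lq_S in H.
  assert (Sq q m x <= 0).
  { destruct (Rle_dec (Sq q m x) 0); auto. assert (0 < pw (Sq q m x) (/q)) by (apply pw_pos_lt; lra). lra. }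
  assert (E := rsum_nonneg_zero m _ (fun i _ => pw_nonneg _ _) H0 i Hi). simpl in E.
  apply pw_zero_inv in E. destruct (Req_dec (x i) 0); auto. assert (Rabs (x i) <> 0) by (apply Rabs_no_R0; auto). lra. apply Rabs_pos. Qed.

Lemma rsum_ge_term m f i : (forall j, (j < m)%nat -> 0 <= f j) -> (i < m)%nat -> f i <= rsum m f.
Proof. induction m; intros H Hi; [lia|]. simpl.
  assert (0 <= rsum m f) by (apply rsum_nonneg; intros; apply H; lia).
  destruct (Nat.eq_dec i m). subst. lra.
  assert (f i <= rsum m f) by (apply IHm; [intros; apply H; lia| lia]).
  assert (0 <= f m) by (apply H; lia). lra. Qed.

Lemma N_coord q m x i : 0 < q -> lq_norm q m x <= 1 -> (i < m)%nat -> Rabs (x i) <= 1.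
Proof. intros Hq H Hi.
  assert (Sq q m x <= 1). { rewrite <- (S_of_N q m x Hq). rewrite <- (pw_one q). apply pw_le; auto. }
  assert (pw (Rabs (x i)) q <= Sq q m x) by (apply (rsum_ge_term m (fun i => pw (Rabs (x i)) q)); auto; intros; apply pw_nonneg).
  destruct (Rle_dec (Rabs (x i)) 1); auto.
  assert (pw 1 q < pw (Rabs (x i)) q) by (apply pw_lt; lra). rewrite pw_one in H2. lra. Qed.

Lemma N_triangle q m u v : 1 <= q ->
  lq_norm q m (fun i => u i + v i) <= lq_norm q m u + lq_norm q m v.
Proof. intros Hq.
  set (a := lq_norm q m u). set (b := lq_norm q m v).
  assert (Ha : 0 <= a) by apply N_nonneg. assert (Hb : 0 <= b) by apply N_nonneg.
  destruct (Req_dec a 0) as [A0|A0].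
  { rewrite A0, Rplus_0_l. right. apply N_ext. intros. rewrite (N_zero q m u) by (auto; lra). f_equal; ring. }
  destruct (Req_dec b 0) as [B0|B0].
  { rewrite B0, Rplus_0_r. right. apply N_ext. intros. rewrite (N_zero q m v) by (auto; lra). f_equal; ring. }
  assert (Sle : Sq q m (fun i => u i + v i) <= pw (a + b) q).
  { set (l := a / (a + b)).
    assert (Hl : 0 <= l <= 1). { unfold l. split. apply Rmult_le_pos; [lra|left; apply Rinv_0_lt_compat; lra].
      apply Rmult_le_reg_r with (a + b); [lra|]. unfold Rdiv. rewrite Rmult_assoc, Rinv_l by lra. lra. }
    unfold Sq.
    apply Rle_trans with (rsum m (fun i => pw (a + b) q * (l * (pw (Rabs (u i)) q / pw a q) + (1 - l) * (pw (Rabs (v i)) q / pw b q)))).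
    - apply rsum_le. intros i Hi.
      apply Rle_trans with (pw (Rabs (u i) + Rabs (v i)) q). apply pw_le; [lra| apply Rabs_triang].
      replace (Rabs (u i) + Rabs (v i)) with ((a + b) * (l * (Rabs (u i) / a) + (1 - l) * (Rabs (v i) / b)))
        by (unfold l; field; lra).
      assert (0 <= Rabs (u i) / a) by (apply Rmult_le_pos; [apply Rabs_pos| left; apply Rinv_0_lt_compat; lra]).
      assert (0 <= Rabs (v i) / b) by (apply Rmult_le_pos; [apply Rabs_pos| left; apply Rinv_0_lt_compat; lra]).
      rewrite pw_mult by (try lra; nra).
      apply Rmult_le_compat_l. apply pw_nonneg.
      eapply Rle_trans. apply pw_convex; auto.
      unfold Rdiv. rewrite !pw_mult, !pw_Rinv; try lra; try apply Rabs_pos; left; apply Rinv_0_lt_compat; lra.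
    - rewrite rsum_scal. rewrite rsum_plus, !rsum_scal.
      unfold Rdiv. rewrite !rsum_scalr.
      fold (Sq q m u). fold (Sq q m v).
      unfold a, b. rewrite !S_of_N by lra. fold a b.
      assert (0 < Sq q m u). { rewrite <- (S_of_N q m u) by lra. apply pw_pos_lt. fold a. lra. }
      assert (0 < Sq q m v). { rewrite <- (S_of_N q m v) by lra. apply pw_pos_lt. fold b. lra. }
      right. rewrite !Rinv_r by lra. ring. }
  rewrite lq_S. rewrite <- (pw_inv (a + b) q) by lra. apply pw_le. apply Rinv_0_lt_compat; lra. auto. Qed.

Lemma N_convex q m x y t : 1 <= q -> 0 <= t <= 1 ->
  lq_norm q m (fun i => t * x i + (1 - t) * y i) <= t * lq_norm q m x + (1 - t) * lq_norm q m y.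
Proof. intros Hq Ht. eapply Rle_trans. apply (N_triangle q m (fun i => t * x i) (fun i => (1 - t) * y i)); auto.
  rewrite !N_hom by lra. rewrite !Rabs_right by lra. lra. Qed.

Lemma dual_lub q m z : 0 < q -> is_lub (dual_set q m z) (dual_norm q m z).
Proof. intros Hq. unfold dual_norm. apply epsilon_spec.
  destruct (completeness (dual_set q m z)) as [d Hd].
  - exists (rsum m (fun i => Rabs (z i))). intros t [x [Hx ->]]. unfold dot.
    apply rsum_le. intros i Hi. assert (Rabs (x i) <= 1) by (eapply N_coord; eauto).
    eapply Rle_trans. apply Rle_abs. rewrite Rabs_mult.
    assert (0 <= Rabs (z i)) by apply Rabs_pos. assert (0 <= Rabs (x i)) by apply Rabs_pos. nra.
  - exists 0. exists (fun _ => 0). split.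
    + rewrite lq_S. unfold Sq. rewrite (rsum_ext m _ (fun _ => 0)). rewrite rsum_zero. rewrite pw_npos; lra.
      intros. rewrite Rabs_R0. apply pw_npos; lra.
    + unfold dot. rewrite (rsum_ext m _ (fun _ => 0)). rewrite rsum_zero; auto. intros; ring.
  - exists d; auto.
Qed.

Lemma dual_ineq q m z x : 1 <= q -> dot m z x <= dual_norm q m z * lq_norm q m x.
Proof. intros Hq. assert (Hq0 : 0 < q) by lra. destruct (dual_lub q m z Hq0) as [Hub _].
  assert (D0 : 0 <= dual_norm q m z).
  { apply Hub. exists (fun _ => 0). split.
    + rewrite lq_S. unfold Sq. rewrite (rsum_ext m _ (fun _ => 0)). rewrite rsum_zero. rewrite pw_npos; lra.
      intros. rewrite Rabs_R0. apply pw_npos; lra.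
    + unfold dot. rewrite (rsum_ext m _ (fun _ => 0)). rewrite rsum_zero; auto. intros; ring. }
  set (L := lq_norm q m x). assert (0 <= L) by apply N_nonneg.
  destruct (Req_dec L 0) as [L0|L0].
  - unfold dot. rewrite (rsum_ext m _ (fun _ => 0)). rewrite rsum_zero. rewrite L0; lra.
    intros. rewrite (N_zero q m x) by auto. ring.
  - assert (dot m z (fun i => / L * x i) <= dual_norm q m z).
    { apply Hub. eexists; split; [|reflexivity]. rewrite N_hom by auto. fold L.
      rewrite Rabs_right. rewrite Rinv_l by auto. lra. left; apply Rinv_0_lt_compat; lra. }
    unfold dot in H0. rewrite (rsum_ext m _ (fun i => / L * (z i * x i))) in H0 by (intros; ring).
    rewrite rsum_scal in H0. fold (dot m z x) in H0.
    apply Rmult_le_compat_l with (r := L) in H0; auto.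
    rewrite <- Rmult_assoc, Rinv_r in H0 by auto. lra. Qed.

Lemma mv_lin c A x y a b : mv c A (fun i => a * x i + b * y i) = fun i => a * mv c A x i + b * mv c A y i.
Proof. apply functional_extensionality; intro i. unfold mv.
  rewrite <- !rsum_scal, <- rsum_plus. apply rsum_ext; intros; ring. Qed.

Lemma mv_minus c A x y i : mv c A (fun i => x i - y i) i = mv c A x i - mv c A y i.
Proof. unfold mv. rewrite <- rsum_minus. apply rsum_ext; intros; ring. Qed.

Lemma mv_ext c A x y : vec_eq c x y -> mv c A x = mv c A y.
Proof. intros H. apply functional_extensionality; intro i. unfold mv. apply rsum_ext; intros; rewrite H; auto. Qed.

Lemma mv_mm c c' A B x : mv c (mm c' A B) x = mv c' A (mv c B x).
Proof. apply functional_extensionality; intro i. unfold mv, mm.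
  rewrite (rsum_ext c _ (fun l => rsum c' (fun j => A i j * B j l * x l))).
  2:{ intros. rewrite <- rsum_scalr. auto. }
  rewrite rsum_exchange. apply rsum_ext. intros. rewrite <- rsum_scal. apply rsum_ext; intros; ring. Qed.

Lemma dot_tr n p e A x : dot n e (mv p A x) = dot p (mv n (tr A) e) x.
Proof. unfold dot, mv, tr.
  rewrite (rsum_ext n _ (fun i => rsum p (fun j => e i * A i j * x j))).
  2:{ intros. rewrite <- rsum_scal. apply rsum_ext; intros; ring. }
  rewrite rsum_exchange. apply rsum_ext. intros. rewrite <- rsum_scalr. apply rsum_ext; intros; ring. Qed.

Lemma dot_rsum m k e f : dot m e (fun i => rsum k (fun j => f j i)) = rsum k (fun j => dot m e (f j)).
Proof. unfold dot. rewrite (rsum_ext m _ (fun i => rsum k (fun j => e i * f j i))).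
  apply rsum_exchange. intros. rewrite rsum_scal. auto. Qed.

Lemma mv_rsum c A k f : mv c A (fun i => rsum k (fun j => f j i)) = fun i => rsum k (fun j => mv c A (f j) i).
Proof. apply functional_extensionality; intro i. unfold mv.
  rewrite (rsum_ext c _ (fun l => rsum k (fun j => A i l * f j l))). apply rsum_exchange.
  intros. rewrite rsum_scal. auto. Qed.

Lemma mv_msum c k F x i : mv c (msum k F) x i = rsum k (fun j => mv c (F j) x i).
Proof. unfold mv, msum. rewrite (rsum_ext c _ (fun l => rsum k (fun j => F j i l * x l))).
  apply rsum_exchange. intros. rewrite rsum_scalr. auto. Qed.

Lemma mv_mat_eq p A B x i : mat_eq p p A B -> (i < p)%nat -> mv p A x i = mv p B x i.
Proof. intros H Hi. unfold mv. apply rsum_ext. intros. rewrite H; auto. Qed.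

Lemma dot_minus m e x y : dot m e (fun i => x i - y i) = dot m e x - dot m e y.
Proof. unfold dot. rewrite <- rsum_minus. apply rsum_ext; intros; ring. Qed.

Lemma dot_ext m e x y : vec_eq m x y -> dot m e x = dot m e y.
Proof. intros H. unfold dot. apply rsum_ext. intros; rewrite H; auto. Qed.

Lemma noise_decomp n p k X (M P : nat -> mat) (e d : vec) :
  mat_eq p p (msum k (fun j => mm p (P j) (mm p (pinv p p (M j)) (M j)))) idm ->
  dot n e (mv p X d) =
  rsum k (fun j => dot p (mv n (tr (mm p (mm p X (P j)) (pinv p p (M j)))) e) (mv p (M j) d)).
Proof. intros H.
  assert (E : vec_eq p d (fun i => rsum k (fun j => mv p (mm p (P j) (mm p (pinv p p (M j)) (M j))) d i))).
  { intros i Hi. rewrite <- mv_msum. rewrite (mv_mat_eq p _ idm) by auto. unfold mv. rewrite rsum_idm; auto. }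
  rewrite (mv_ext p X _ _ E). rewrite mv_rsum.
  rewrite dot_rsum.
  apply rsum_ext. intros j Hj. rewrite <- dot_tr. f_equal.
  rewrite !mv_mm. auto. Qed.
Lemma dquad s A B : derivable_pt_lim (fun t => s - 2*t*A + t*t*B) 0 (-2*A).
Proof. intros.
assert (H0 : derivable_pt_lim (fun t => 2*A*t) 0 (2*A*1)).
{ apply derivable_pt_lim_scal. apply derivable_pt_lim_id. }
assert (H1 := derivable_pt_lim_minus _ _ 0 _ _ (derivable_pt_lim_const s 0) H0).
assert (H3 : derivable_pt_lim (fun t => t*t) 0 (1*0+0*1)).
{ apply (derivable_pt_lim_mult id id). apply derivable_pt_lim_id. apply derivable_pt_lim_id. }
assert (H2 := derivable_pt_lim_mult _ _ 0 _ _ H3 (derivable_pt_lim_const B 0)).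
assert (H := derivable_pt_lim_plus _ _ 0 _ _ H1 H2).
assert (E : plus_fct (minus_fct (fct_cte s) (fun t => 2*A*t)) (mult_fct (fun t=>t*t) (fct_cte B)) = (fun t => s - 2*t*A + t*t*B)).
{ apply functional_extensionality; intros; unfold plus_fct, minus_fct, mult_fct, fct_cte; ring. }
rewrite E in H. unfold fct_cte in H.
replace (-2*A) with (0 - 2*A*1 + ((1*0+0*1)*B + 0*0*0)) by ring. exact H.
Qed.

Definition pen p k (M : nat -> mat) (q lam : nat -> R) (b : vec) :=
  rsum k (fun j => lam j * lq_norm (q j) p (mv p (M j) b)).

Lemma kkt n p k g dg X Y M q lam bhat b :
  (forall j, (j < k)%nat -> 1 <= q j) -> (forall j, (j < k)%nat -> 0 <= lam j) ->
  is_argmin n p k g X Y M q lam bhat ->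
  derivable_pt_lim g (sqnorm n (resid n p X Y bhat)) (dg (sqnorm n (resid n p X Y bhat))) ->
  2 * dg (sqnorm n (resid n p X Y bhat)) * dot n (resid n p X Y bhat) (mv p X (fun i => b i - bhat i))
   <= pen p k M q lam b - pen p k M q lam bhat.
Proof. intros Hq Hl Hmin Hd.
  set (s := sqnorm n (resid n p X Y bhat)) in *.
  set (r := resid n p X Y bhat) in *.
  set (w := mv p X (fun i => b i - bhat i)).
  set (A := dot n r w). set (B := sqnorm n w).
  set (Q := pen p k M q lam b - pen p k M q lam bhat).
  set (bt := fun t => fun i => t * b i + (1 - t) * bhat i).
  assert (Hres : forall t, sqnorm n (resid n p X Y (bt t)) = s - 2 * t * A + t * t * B).
  { intro t. unfold sqnorm, dot.
    rewrite (rsum_ext n _ (fun i => r i * r i - (2 * t) * (r i * w i) + (t * t) * (w i * w i))).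
    rewrite rsum_plus, rsum_minus, !rsum_scal. unfold s, A, B, sqnorm, dot. ring.
    intros i Hi. unfold resid, bt. rewrite mv_lin. unfold r, resid, w. rewrite mv_minus. ring. }
  assert (Hpen : forall t, 0 <= t <= 1 -> pen p k M q lam (bt t) <= t * pen p k M q lam b + (1 - t) * pen p k M q lam bhat).
  { intros t Ht. unfold pen. rewrite <- !rsum_scal, <- rsum_plus. apply rsum_le. intros j Hj.
    unfold bt. rewrite mv_lin.
    assert (C := N_convex (q j) p (mv p (M j) b) (mv p (M j) bhat) t (Hq j Hj) Ht).
    assert (0 <= lam j) by auto.
    apply Rmult_le_compat_l with (r := lam j) in C; auto. lra. }
  assert (Hineq : forall t, 0 <= t <= 1 -> g s - g (s - 2 * t * A + t * t * B) <= t * Q).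
  { intros t Ht. specialize (Hmin (bt t)). unfold objective in Hmin. fold (pen p k M q lam bhat) in Hmin.
    fold (pen p k M q lam (bt t)) in Hmin. fold r s in Hmin. rewrite Hres in Hmin.
    specialize (Hpen t Ht). unfold Q. lra. }
  assert (Hder : derivable_pt_lim (comp g (fun t => s - 2*t*A + t*t*B)) 0 (dg s * (-2 * A))).
  { apply derivable_pt_lim_comp. apply dquad. replace (s - 2 * 0 * A + 0 * 0 * B) with s by ring. auto. }
  destruct (Rle_dec (2 * dg s * A) Q) as [Hok|Hko]; auto. exfalso.
  destruct (Hder (2 * dg s * A - Q) ltac:(lra)) as [del Hdel].
  set (t := Rmin (del / 2) (1 / 2)).
  assert (Ht0 : 0 < t). { unfold t. apply Rmin_glb_lt. destruct del; simpl; lra. lra. }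
  assert (Ht1 : t <= 1 / 2) by apply Rmin_r.
  assert (Htd : t < del). { assert (t <= del / 2) by apply Rmin_l. destruct del; simpl in *; lra. }
  specialize (Hdel t ltac:(lra) ltac:(rewrite Rabs_right; lra)).
  unfold comp in Hdel. replace (0 + t) with t in Hdel by ring.
  replace (s - 2 * 0 * A + 0 * 0 * B) with s in Hdel by ring.
  specialize (Hineq t ltac:(lra)).
  apply Rabs_def2 in Hdel. destruct Hdel as [Hd1 Hd2].
  assert ((g (s - 2 * t * A + t * t * B) - g s) / t < - Q) by lra.
  assert (g (s - 2 * t * A + t * t * B) - g s < - Q * t).
  { apply Rmult_lt_compat_r with (r := t) in H; auto. unfold Rdiv in H. rewrite Rmult_assoc, Rinv_l in H by lra. lra. }
  lra.
Qed.

Lemma maxr_aux_ge m f j : (j <= m)%nat -> f j <= maxr_aux m f.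
Proof. induction m; intros H. replace j with 0%nat by lia. simpl; lra.
  simpl. destruct (Nat.eq_dec j (S m)). subst. apply Rmax_r.
  eapply Rle_trans. apply IHm; lia. apply Rmax_l. Qed.

Lemma max_lt_ge k f j : (j < k)%nat -> f j <= max_lt k f.
Proof. intros. unfold max_lt. apply maxr_aux_ge. lia. Qed.

Theorem mainTheorem8
  (n p k : nat) (X : mat) (bstar eps Y : vec) (g dg : R -> R)
  (M P : nat -> mat) (q c lam : nat -> R) (bhat : vec) :
  (* model *)
  (forall i, (i < n)%nat -> Y i = mv p X bstar i + eps i) ->
  (* link function *)
  link_ok n g dg ->
  (* penalty *)
  (1 <= k)%nat ->
  (forall j, (j < k)%nat -> 1 <= q j) ->
  (forall b : vec, (forall j, (j < k)%nat -> vec_eq p (mv p (M j) b) (fun _ => 0)) ->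
     vec_eq p b (fun _ => 0)) ->
  (forall j, (j < k)%nat -> mat_eq p p (mm p (P j) (P j)) (P j)) ->
  mat_eq p p (msum k (fun j => mm p (P j) (mm p (pinv p p (M j)) (M j)))) idm ->
  (* noise assumption (realization of the probability-one event) *)
  (exists i, (i < n)%nat /\ Y i <> 0) ->
  (forall j, (j < k)%nat -> 0 < Dnoise n p X P M q eps j) ->
  (* the theorem's hypotheses *)
  (forall j, (j < k)%nat -> 1 < c j) ->
  (forall j, (j < k)%nat -> 0 < lam j) ->
  is_argmin n p k g X Y M q lam bhat ->
  0 < sqnorm n (resid n p X Y bhat) ->
  (forall j, (j < k)%nat ->
     lam j / (2 * dg (sqnorm n (resid n p X Y bhat))) = c j * Dnoise n p X P M q eps j) ->
  let a := fun j => 2 * (c j - 1) * Dnoise n p X P M q eps j in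
  forall b : vec,
    La n p k X bstar M q a bhat
      <= (1 + max_lt k (fun j => 4 * Dnoise n p X P M q eps j / a j))
         * La n p k X bstar M q a b.
Proof.
  intros Hmod Hlink Hk Hq Hker HP Hsum [i0 [Hi0 _]] HN Hc Hl Hmin Hs Hlam a b.
  destruct Hlink as [_ [_ [_ [_ [Hgd [_ [Hdgp _]]]]]]].
  set (s := sqnorm n (resid n p X Y bhat)) in *.
  set (D := dg s). assert (HD : 0 < D) by (apply Hdgp; auto).
  set (N := Dnoise n p X P M q eps) in *.
  set (z := fun j => mv n (tr (mm p (mm p X (P j)) (pinv p p (M j)))) eps).
  set (nb := fun j => lq_norm (q j) p (mv p (M j) b)).
  set (nh := fun j => lq_norm (q j) p (mv p (M j) bhat)).
  set (m := max_lt k (fun j => 4 * N j / a j)).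
  set (r := resid n p X Y bhat) in *.
  set (w := mv p X (fun i => b i - bhat i)).
  set (u := mv p X (fun i => bstar i - bhat i)).
  set (v := mv p X (fun i => bstar i - b i)).
  assert (Ha : forall j, (j < k)%nat -> 0 < a j).
  { intros j Hj. unfold a. specialize (Hc j Hj). specialize (HN j Hj). fold N. nra. }
  assert (Hlamj : forall j, (j < k)%nat -> lam j = 2 * D * (c j * N j)).
  { intros j Hj. rewrite <- (Hlam j Hj). fold D. field. lra. }
  assert (K := kkt n p k g dg X Y M q lam bhat b Hq (fun j Hj => Rlt_le _ _ (Hl j Hj)) Hmin (Hgd s Hs)).
  fold s r D w in K.
  assert (K2 : dot n r w <= rsum k (fun j => c j * N j * (nb j - nh j))).
  { unfold pen in K. rewrite <- rsum_minus in K.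
    rewrite (rsum_ext k _ (fun j => 2 * D * (c j * N j * (nb j - nh j)))) in K.
    2:{ intros j Hj. rewrite Hlamj by auto. unfold nb, nh. ring. }
    rewrite rsum_scal in K. 
    change (dg (sqnorm n r)) with D in K. apply Rmult_le_reg_l with (2 * D). lra. lra. }
  assert (E1 : dot n eps w = rsum k (fun j => dot p (z j) (mv p (M j) b) - dot p (z j) (mv p (M j) bhat))).
  { unfold w. rewrite (noise_decomp n p k X M P eps) by auto. apply rsum_ext. intros j Hj.
    rewrite <- dot_minus. apply dot_ext. intros i Hi. rewrite mv_minus. auto. }
  assert (E2 : forall j, (j < k)%nat ->
     - N j * nb j - N j * nh j <= dot p (z j) (mv p (M j) b) - dot p (z j) (mv p (M j) bhat)).
  { intros j Hj. 
    assert (A1 := dual_ineq (q j) p (z j) (mv p (M j) bhat) (Hq j Hj)).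
    assert (A2 := dual_ineq (q j) p (z j) (fun i => -1 * mv p (M j) b i) (Hq j Hj)).
    rewrite N_hom in A2 by (specialize (Hq j Hj); lra).
    unfold dot in A2. rewrite (rsum_ext p _ (fun i => -1 * (z j i * mv p (M j) b i))) in A2 by (intros; ring).
    rewrite rsum_scal in A2. fold (dot p (z j) (mv p (M j) b)) in A2.
    replace (Rabs (-1)) with 1 in A2 by (rewrite Rabs_left; lra).
    change (dual_norm (q j) p (z j)) with (N j) in A1, A2. fold (nb j) in A2. fold (nh j) in A1. lra. }
  (* r = u + eps *)
  assert (E3 : dot n r w = dot n u w + dot n eps w).
  { unfold dot. rewrite <- rsum_plus. apply rsum_ext. intros i Hi. unfold r, resid, u.
    rewrite mv_minus, Hmod by auto. ring. }
  assert (E4 : sqnorm n u <= sqnorm n v + 2 * dot n u w).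
  { assert (sqnorm n v = sqnorm n u - 2 * dot n u w + sqnorm n w).
    { unfold sqnorm, dot. rewrite <- rsum_scal, <- rsum_minus, <- rsum_plus. apply rsum_ext. intros i Hi.
      unfold u, v, w. rewrite !mv_minus. ring. }
    assert (0 <= sqnorm n w) by (apply rsum_nonneg; intros; nra). lra. }
  assert (Hsum2 : - rsum k (fun j => N j * nb j + N j * nh j) <= dot n eps w).
  { rewrite E1. rewrite <- (Rmult_1_l (rsum _ _)). rewrite Ropp_mult_distr_l, <- rsum_scal.
    apply rsum_le. intros j Hj. specialize (E2 j Hj). lra. }
  assert (Hnb : forall j, 0 <= nb j) by (intros; apply N_nonneg).
  assert (Hnh : forall j, 0 <= nh j) by (intros; apply N_nonneg).
  assert (Hm0 : 0 <= m).
  { eapply Rle_trans with (4 * N 0%nat / a 0%nat). 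
    assert (0 < N 0%nat) by (apply HN; lia). assert (0 < a 0%nat) by (apply Ha; lia).
    unfold Rdiv. apply Rmult_le_pos. lra. left; apply Rinv_0_lt_compat; auto.
    apply (max_lt_ge k (fun j => 4 * N j / a j)). lia. }
  assert (Main : sqnorm n u + rsum k (fun j => a j * nh j)
                 <= (1 + m) * (sqnorm n v + rsum k (fun j => a j * nb j))).
  { assert (S1 : rsum k (fun j => a j * nh j) + 2 * rsum k (fun j => c j * N j * (nb j - nh j))
                 + 2 * rsum k (fun j => N j * nb j + N j * nh j)
                 <= m * rsum k (fun j => a j * nb j) + rsum k (fun j => a j * nb j)).
    { rewrite <- !rsum_scal, <- !rsum_plus. apply rsum_le. intros j Hj.
      assert (Hm : 4 * N j / a j <= m) by (apply (max_lt_ge k (fun j => 4 * N j / a j)); auto).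
      assert (Haj := Ha j Hj).
      assert (4 * N j <= m * a j).
      { apply Rmult_le_compat_r with (r := a j) in Hm; [|lra]. unfold Rdiv in Hm.
        rewrite Rmult_assoc, Rinv_l in Hm by lra. lra. }
      assert (4 * N j * nb j <= m * a j * nb j) by (apply Rmult_le_compat_r; auto).
      assert (Ea : a j = 2 * (c j - 1) * N j) by reflexivity. rewrite Ea in *. nra. }
    assert (0 <= m * sqnorm n v) by (apply Rmult_le_pos; auto; apply rsum_nonneg; intros; nra).
    lra. }
  unfold La. fold u v. fold nh nb.
  assert (Hn : 0 < INR n) by (apply lt_0_INR; lia).
  assert (0 < / INR n) by (apply Rinv_0_lt_compat; auto).
  apply Rmult_le_compat_l with (r := / INR n) in Main; [|lra].
  change (rsum k (fun j => a j * lq_norm (q j) p (mv p (M j) bhat))) with (rsum k (fun j => a j * nh j)).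
  change (rsum k (fun j => a j * lq_norm (q j) p (mv p (M j) b))) with (rsum k (fun j => a j * nb j)).
  replace ((1 + m) * (/ INR n * sqnorm n v + / INR n * rsum k (fun j => a j * nb j)))
    with (/ INR n * ((1 + m) * (sqnorm n v + rsum k (fun j => a j * nb j)))) by ring.
  lra.
Qed.
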